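(* Let $i\ge1$ and let $(a_j)_{j\ge1}$ satisfy $\delta_0\le a_j\le Aj$ for all $j\ge1$, for some $A>0$ and $\delta_0>0$. Let $y_0\in\mathcal X^+_{1,i}$ with $y_{i,0}>0$, and let $y$ be the solution of $dy/dt=F(y)$, $y(0)=y_0$. Let $$t_*:=\sup\{t>0:\ y_i(s)>0 \text{ for all } s\in[0,t)\}.$$ Then $t_*\in(0,\infty)$.
   Context: $\|x\|_{1,1}=\sum_j j|x_j|$, $\mathcal X_{1,1}=\{x:\|x\|_{1,1}<\infty\}$, $\mathcal X_{1,i}=\{x\in\mathcal X_{1,1}:x_j=0 \text{ for } j<i\}$, and $\mathcal X^+_{1,i}$ is the subset with nonnegative entries. $F$ is defined by - $F_j(y)=0$ for $j<i$; - $F_i(y)=-a_iy_i-\sum_{j\ge i}a_jy_j$; - $F_j(y)=a_{j-i}y_{j-i}-a_jy_j$ for $j\ge i+1$. The solution $y\in C([0,\infty);\mathcal X_{1,i})$, with $C^1$ components, exists and is unique. *)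

(* Defs.v *)
(* classical reals. Sequences x = (x_j)_{j>=1} are modelled as
   nat -> R; the index 0 is forced to be 0 by membership in X_{1,i}, i >= 1. *)
From Stdlib Require Import Reals.
Open Scope R_scope.

Definition series_cv (f : nat -> R) (l : R) : Prop :=
  Un_cv (fun n => sum_f_R0 f n) l.

Definition in_X11 (x : nat -> R) : Prop :=
  exists l, series_cv (fun j => INR j * Rabs (x j)) l.

Definition in_X1i (i : nat) (x : nat -> R) : Prop :=
  in_X11 x /\ (forall j, (j < i)%nat -> x j = 0).

Definition in_X1i_pos (i : nat) (x : nat -> R) : Prop :=
  in_X1i i x /\ (forall j, 0 <= x j).

Definition dist11_le (x z : nat -> R) (e : R) : Prop :=
  forall n, sum_f_R0 (fun j => INR j * Rabs (x j - z j)) n <= e.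

(* v = F_j(x), with F as in the paper (the series in F_i is required to converge) *)
Definition F_rel (a : nat -> R) (i : nat) (x : nat -> R) (j : nat) (v : R) : Prop :=
  ((j < i)%nat -> v = 0) /\
  (j = i -> exists S, series_cv (fun k => a (i + k)%nat * x (i + k)%nat) S /\
                      v = - a i * x i - S) /\
  ((i < j)%nat -> v = a (j - i)%nat * x (j - i)%nat - a j * x j).

Definition deriv_on_nonneg (f f' : R -> R) : Prop :=
  (forall t, 0 < t -> derivable_pt_lim f t (f' t)) /\
  (forall eps, 0 < eps -> exists delta, 0 < delta /\
     forall h, 0 < h < delta -> Rabs ((f h - f 0) / h - f' 0) < eps).

Definition cont_on_nonneg (g : R -> R) : Prop :=
  forall t, 0 <= t -> forall eps, 0 < eps -> exists delta, 0 < delta /\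
    forall s, 0 <= s -> Rabs (s - t) < delta -> Rabs (g s - g t) < eps.

Definition is_solution (a : nat -> R) (i : nat) (y0 : nat -> R)
    (y : R -> nat -> R) : Prop :=
  y 0 = y0 /\
  (forall t, 0 <= t -> in_X1i i (y t)) /\
  (forall t, 0 <= t -> forall eps, 0 < eps -> exists delta, 0 < delta /\
     forall s, 0 <= s -> Rabs (s - t) < delta -> dist11_le (y s) (y t) eps) /\
  exists dy : R -> nat -> R,
    forall j, deriv_on_nonneg (fun t => y t j) (fun t => dy t j) /\
              cont_on_nonneg (fun t => dy t j) /\
              (forall t, 0 <= t -> F_rel a i (y t) j (dy t j)).

(* Main.v *)
Require Import Defs.
From Stdlib Require Import Reals Lra Lia Psatz Classical Arith Wf_nat.
Open Scope R_scope.

Lemma dl_plus f g x l1 l2 : derivable_pt_lim f x l1 -> derivable_pt_lim g x l2 ->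
  derivable_pt_lim (fun t => f t + g t) x (l1 + l2).
Proof. intros; apply (derivable_pt_lim_plus f g); auto. Qed.
Lemma dl_minus f g x l1 l2 : derivable_pt_lim f x l1 -> derivable_pt_lim g x l2 ->
  derivable_pt_lim (fun t => f t - g t) x (l1 - l2).
Proof. intros; apply (derivable_pt_lim_minus f g); auto. Qed.
Lemma dl_mult f g x l1 l2 : derivable_pt_lim f x l1 -> derivable_pt_lim g x l2 ->
  derivable_pt_lim (fun t => f t * g t) x (l1 * g x + f x * l2).
Proof. intros; apply (derivable_pt_lim_mult f g); auto. Qed.
Lemma dl_const c x : derivable_pt_lim (fun _ => c) x 0.
Proof. apply derivable_pt_lim_const. Qed.
Lemma dl_lin c x : derivable_pt_lim (fun t => c * t) x c.
Proof. assert (H := dl_mult (fun _ => c) id x 0 1 (dl_const c x) (derivable_pt_lim_id x)).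
  unfold id in H. replace (0 * x + c * 1) with c in H by ring. exact H. Qed.
Lemma dl_expl c x : derivable_pt_lim (fun t => exp (c * t)) x (exp (c * x) * c).
Proof. apply (derivable_pt_lim_comp (fun t => c * t) exp). apply dl_lin. apply derivable_pt_lim_exp. Qed.

Lemma mono_up g g' a b : 0 <= a -> a <= b ->
  (forall t, a <= t <= b -> derivable_pt_lim g t (g' t)) ->
  (forall t, a <= t <= b -> 0 <= g' t) -> g a <= g b.
Proof.
  intros Ha Hab Hd Hp. destruct (Rle_lt_or_eq_dec _ _ Hab) as [Hlt|Heq].
  - destruct (MVT_cor2 g g' a b Hlt Hd) as [c [Hc1 Hc2]].
    assert (0 <= g' c) by (apply Hp; lra). nra.
  - subst; lra.
Qed.

Lemma series_ge f l n : (forall k, 0 <= f k) -> series_cv f l -> sum_f_R0 f n <= l.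
Proof.
  intros Hf Hc. apply (growing_ineq (fun n => sum_f_R0 f n)); auto.
  intro m. simpl. specialize (Hf (S m)). lra.
Qed.

Lemma sum_gap f n p : (forall k, 0 <= f k) -> (0 < p)%nat ->
  sum_f_R0 f n + f (n + p)%nat <= sum_f_R0 f (n + p).
Proof.
  intros Hf. induction p as [|p IH]; intros Hp. lia.
  destruct p as [|p].
  - replace (n+1)%nat with (S n) by lia. simpl. lra.
  - replace (n + S (S p))%nat with (S (n + S p)) by lia. simpl.
    assert (H := IH ltac:(lia)). specialize (Hf (n + S p)%nat).
    replace (S (n + S p)) with (n + S (S p))%nat by lia. lra.
Qed.

Definition ext (f f' : R -> R) (t : R) : R :=
  if Rlt_dec t 0 then f 0 + f' 0 * t else f t.
Definition ext' (f' : R -> R) (t : R) : R :=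
  if Rlt_dec t 0 then f' 0 else f' t.

Lemma ext_eq f f' t : 0 <= t -> ext f f' t = f t.
Proof. intro; unfold ext; destruct (Rlt_dec t 0); lra. Qed.

Lemma ext_deriv f f' : deriv_on_nonneg f f' ->
  forall t, 0 <= t -> derivable_pt_lim (ext f f') t (f' t).
Proof.
  intros [Hpos H0] t Ht. destruct (Rle_lt_or_eq_dec _ _ Ht) as [Hlt|Heq].
  - intros eps Heps. destruct (Hpos t Hlt eps Heps) as [d Hd].
    assert (Hm : 0 < Rmin d t) by (apply Rmin_pos; [apply cond_pos|lra]).
    exists (mkposreal _ Hm). intros h Hh Hh2. simpl in Hh2.
    rewrite !ext_eq; try lra.
    + apply Hd; auto. apply Rlt_le_trans with (1 := Hh2). apply Rmin_l.
    + assert (Rabs h < t) by (apply Rlt_le_trans with (1 := Hh2); apply Rmin_r).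
      apply Rabs_def2 in H. lra.
  - subst t. intros eps Heps. destruct (H0 eps Heps) as [d [Hd1 Hd2]].
    exists (mkposreal _ Hd1). intros h Hh Hh2. simpl in Hh2.
    rewrite Rplus_0_l. rewrite (ext_eq f f' 0) by lra.
    destruct (Rlt_dec h 0) as [Hn|Hn].
    + unfold ext. destruct (Rlt_dec h 0); [|lra].
      replace ((f 0 + f' 0 * h - f 0) / h - f' 0) with 0 by (field; lra).
      rewrite Rabs_R0; lra.
    + rewrite ext_eq by lra. apply Hd2. apply Rabs_def2 in Hh2. lra.
Qed.

Lemma dl_eq f x l l' : derivable_pt_lim f x l -> l = l' -> derivable_pt_lim f x l'.
Proof. intros H ->; exact H. Qed.

Fixpoint Tv (i:nat) (x:nat->R) n := match n with 0%nat => 0 | S n => Tv i x n + x ((n+2)*i)%nat end.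
Fixpoint Wv i x K := match K with 0%nat => 0 | S K => Wv i x K + Tv i x (S K) end.
Fixpoint Qv i (a : nat -> R) (x : nat -> R) K := match K with 0%nat => 0 | S K => Qv i a x K + a ((K+2)*i)%nat * x ((K+2)*i)%nat end.

Lemma Tv_ext i x x' n : (forall j, x j = x' j) -> Tv i x n = Tv i x' n.
Proof. intro H; induction n; simpl; [lra| rewrite IHn, H; lra]. Qed.
Lemma Wv_ext i x x' n : (forall j, x j = x' j) -> Wv i x n = Wv i x' n.
Proof. intro H; induction n; simpl Wv; [lra| rewrite IHn; rewrite (Tv_ext i x x' n H), H; lra]. Qed.
Lemma Tv_nn i x n : (forall j, 0 <= x j) -> 0 <= Tv i x n.
Proof. intro H; induction n; simpl; [lra| specialize (H ((n+2)*i)%nat); lra]. Qed.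
Lemma Wv_nn i x n : (forall j, 0 <= x j) -> 0 <= Wv i x n.
Proof. intro H; induction n; simpl Wv; [lra| pose proof (Tv_nn i x (S n) H); simpl in *; lra]. Qed.
Lemma Tv_mono i x n : (forall j, 0 <= x j) -> Tv i x n <= Tv i x (S n).
Proof. intro H; simpl; specialize (H ((n+2)*i)%nat); lra. Qed.
Lemma Wv_le i x K : (forall j, 0 <= x j) -> Wv i x K <= INR K * Tv i x K.
Proof.
  intro H; induction K. simpl; lra.
  change (Wv i x (S K)) with (Wv i x K + Tv i x (S K)).
  pose proof (Tv_mono i x K H). pose proof (pos_INR K). rewrite S_INR.
  assert (INR K * Tv i x K <= INR K * Tv i x (S K)) by (apply Rmult_le_compat_l; lra).
  set (u := Tv i x (S K)) in *. set (v := Tv i x K) in *. lra.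
Qed.
Lemma Qv_ge i a x K d : (1 <= i)%nat -> (forall j, 0 <= x j) -> (forall j, (1 <= j)%nat -> d <= a j) ->
  d * Tv i x K <= Qv i a x K.
Proof.
  intros Hi H Ha; induction K; simpl. lra.
  assert (d <= a ((K+2)*i)%nat) by (apply Ha; nia).
  specialize (H ((K+2)*i)%nat). nra.
Qed.
Lemma Qv_sum i a x K : (1 <= i)%nat -> (forall k, 0 <= a (i+k)%nat * x (i+k)%nat) ->
  a i * x i + Qv i a x K <= sum_f_R0 (fun k => a (i+k)%nat * x (i+k)%nat) (K*i).
Proof.
  intros Hi Hf. induction K.
  - simpl. rewrite Nat.add_0_r. lra.
  - simpl Qv. replace (S K * i)%nat with (K*i + i)%nat by ring.
    pose proof (sum_gap (fun k => a (i+k)%nat * x (i+k)%nat) (K*i) i Hf ltac:(lia)).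
    simpl in H. replace (i + (K*i+i))%nat with ((K+2)*i)%nat in H by ring. lra.
Qed.

Lemma dl_opp f x l : derivable_pt_lim f x l -> derivable_pt_lim (fun t => - f t) x (- l).
Proof. intro H; apply (derivable_pt_lim_opp f); auto. Qed.

Section Main.
Variables (i : nat) (a : nat -> R) (delta0 : R) (y0 : nat -> R) (y dy : R -> nat -> R).
Hypothesis Hi : (1 <= i)%nat.
Hypothesis Hd0 : 0 < delta0.
Hypothesis Ha : forall j, (1 <= j)%nat -> delta0 <= a j.
Hypothesis Hy0p : forall j, 0 <= y0 j.
Hypothesis Hy0 : y 0 = y0.
Hypothesis Hlow : forall t, 0 <= t -> forall j, (j < i)%nat -> y t j = 0.
Hypothesis Hder : forall j, deriv_on_nonneg (fun t => y t j) (fun t => dy t j).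
Hypothesis HF : forall t j, 0 <= t -> F_rel a i (y t) j (dy t j).
Hypothesis Hpos : forall t, 0 <= t -> 0 < y t i.

Definition E j := ext (fun t => y t j) (fun t => dy t j).
Lemma E_eq j t : 0 <= t -> E j t = y t j.
Proof. intro; unfold E; apply ext_eq; auto. Qed.
Lemma E_der j t : 0 <= t -> derivable_pt_lim (E j) t (dy t j).
Proof. intro; unfold E; apply ext_deriv; auto. Qed.

Lemma dy_up t j : 0 <= t -> (i < j)%nat -> dy t j = a (j - i)%nat * y t (j - i)%nat - a j * y t j.
Proof. intros Ht Hj. destruct (HF t j Ht) as [_ [_ H]]. auto. Qed.

Lemma ypos : forall j t, 0 <= t -> 0 <= y t j.
Proof.
  intro j. induction j as [j IH] using (well_founded_induction lt_wf). intros t Ht.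
  destruct (lt_eq_lt_dec j i) as [[Hlt|Heq]|Hgt].
  - rewrite Hlow; auto; lra.
  - subst; left; auto.
  - set (c := a j).
    set (g' := fun s => exp (c * s) * c * E j s + exp (c * s) * dy s j).
    assert (Hm : (fun s => exp (c*s) * E j s) 0 <= (fun s => exp (c*s) * E j s) t).
    { apply (mono_up (fun s => exp (c*s) * E j s) g' 0 t); auto; try lra.
      - intros s Hs. unfold g'. apply (dl_mult (fun s => exp (c*s)) (E j)). apply dl_expl. apply E_der; lra.
      - intros s Hs. unfold g'. rewrite dy_up by (auto; lra). rewrite E_eq by lra.
        assert (0 <= y s (j - i)%nat) by (apply IH; [lia|lra]).
        assert (delta0 <= a (j - i)%nat) by (apply Ha; lia).
        pose proof (exp_pos (c*s)). unfold c.
        replace (exp (a j * s) * a j * y s j + exp (a j * s) * (a (j - i)%nat * y s (j - i)%nat - a j * y s j))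
          with (exp (a j * s) * (a (j - i)%nat * y s (j - i)%nat)) by ring.
        pose proof (exp_pos (a j * s)); apply Rmult_le_pos; [lra|]. apply Rmult_le_pos; lra. }
    simpl in Hm. rewrite !E_eq in Hm by lra. rewrite Rmult_0_r, exp_0, Hy0 in Hm.
    specialize (Hy0p j). pose proof (exp_pos (c*t)). nra.
Qed.

Lemma key t K : 0 <= t -> dy t i <= - 2 * a i * y t i - Qv i a (y t) K.
Proof.
  intro Ht. destruct (HF t i Ht) as [_ [H _]]. destruct (H eq_refl) as [S [HS Hd]].
  assert (Hnn : forall k, 0 <= a (i+k)%nat * y t (i+k)%nat).
  { intro k. assert (delta0 <= a (i+k)%nat) by (apply Ha; lia). pose proof (ypos (i+k) t Ht). nra. }
  pose proof (Qv_sum i a (y t) K Hi Hnn). pose proof (series_ge _ S (K*i) Hnn HS). lra.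
Qed.

Lemma Tder n t : 0 <= t -> derivable_pt_lim (fun s => Tv i (fun j => E j s) n) t
   (a i * y t i - a ((n+1)*i)%nat * y t ((n+1)*i)%nat).
Proof.
  intro Ht. induction n.
  - simpl. eapply dl_eq. apply dl_const. rewrite Nat.add_0_r. ring.
  - simpl Tv. eapply dl_eq. apply dl_plus. apply IHn. apply E_der; auto.
    rewrite dy_up by (auto; nia).
    replace ((n+2)*i - i)%nat with ((n+1)*i)%nat by (rewrite Nat.mul_add_distr_r; lia).
    replace ((S n + 1) * i)%nat with ((n+2)*i)%nat by ring. ring.
Qed.

Lemma Wder K t : 0 <= t -> derivable_pt_lim (fun s => Wv i (fun j => E j s) K) t
   (INR K * a i * y t i - Qv i a (y t) K).
Proof.
  intro Ht. induction K.
  - simpl. eapply dl_eq. apply dl_const. ring.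
  - eapply dl_eq. apply (dl_plus (fun s => Wv i (fun j => E j s) K) (fun s => Tv i (fun j => E j s) (S K))). apply IHK. apply Tder; auto.
    simpl Qv. rewrite S_INR. replace ((S K + 1) * i)%nat with ((K+2)*i)%nat by ring. ring.
Qed.

Lemma udec s t : 0 <= s -> s <= t -> y t i <= y s i.
Proof.
  intros Hs Hst. assert (H : (fun r => - E i r) s <= (fun r => - E i r) t).
  { apply (mono_up (fun r => - E i r) (fun r => - dy r i) s t Hs Hst).
    - intros r Hr. apply dl_opp. apply E_der; lra.
    - intros r Hr. pose proof (key r 0 ltac:(lra)). simpl in H.
      pose proof (Hpos r ltac:(lra)). assert (delta0 <= a i) by (apply Ha; lia). nra. }
  simpl in H. rewrite !E_eq in H by lra. lra.
Qed.

Lemma contradiction : False.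
Proof.
  set (m1 := y 1 i). set (u0 := y0 i).
  assert (Hm1 : 0 < m1) by (apply Hpos; lra).
  assert (Hai : delta0 <= a i) by (apply Ha; lia).
  destruct (INR_unbounded (u0 / (delta0 * m1))) as [n Hn].
  set (K := S n).
  assert (HK : 0 < INR K) by (unfold K; rewrite S_INR; pose proof (pos_INR n); lra).
  assert (HKb : u0 <= INR K * delta0 * m1).
  { unfold K; rewrite S_INR. replace u0 with (u0 / (delta0 * m1) * (delta0 * m1)) by (field; lra).
    assert (0 < delta0 * m1) by nra. nra. }
  set (V := fun s => Wv i (fun j => E j s) K - E i s).
  assert (HV : forall t, 0 <= t -> derivable_pt_lim V t (INR K * a i * y t i - Qv i a (y t) K - dy t i)).
  { intros t Ht. apply dl_minus. apply Wder; auto. apply E_der; auto. }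
  assert (HV' : forall t, 0 <= t -> (INR K + 2) * a i * y t i <= INR K * a i * y t i - Qv i a (y t) K - dy t i).
  { intros t Ht. pose proof (key t K Ht). lra. }
  set (cc := (INR K + 2) * delta0 * m1).
  assert (H1 : (fun s => V s - cc * s) 0 <= (fun s => V s - cc * s) 1).
  { apply (mono_up (fun s => V s - cc * s) (fun s => (INR K * a i * y s i - Qv i a (y s) K - dy s i) - cc) 0 1); try lra.
    - intros s Hs. apply (dl_minus V (fun s => cc * s)). apply HV; lra. apply dl_lin.
    - intros s Hs. pose proof (HV' s ltac:(lra)). pose proof (udec s 1 ltac:(lra) ltac:(lra)).
      fold m1 in H0. unfold cc. assert (delta0 * m1 <= a i * y s i) by nra. nra. }
  simpl in H1.
  assert (HV0 : V 0 >= - u0).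
  { unfold V. rewrite E_eq by lra. rewrite (Wv_ext i _ (y 0)) by (intro; apply E_eq; lra).
    pose proof (Wv_nn i (y 0) K (fun j => ypos j 0 ltac:(lra))). rewrite Hy0 in *. unfold u0. lra. }
  assert (HW : forall t, 1 <= t -> 2 * delta0 * m1 <= Wv i (y t) K).
  { intros t Ht. assert (H2 : V 1 <= V t).
    { apply (mono_up V (fun s => INR K * a i * y s i - Qv i a (y s) K - dy s i) 1 t); try lra.
      intros s Hs. apply HV; lra.
      intros s Hs. pose proof (HV' s ltac:(lra)). pose proof (Hpos s ltac:(lra)).
      assert (0 <= (INR K + 2) * a i * y s i) by (apply Rmult_le_pos; [apply Rmult_le_pos|]; lra). lra. }
    assert (HVt : V t = Wv i (y t) K - y t i).
    { unfold V. rewrite (E_eq i t) by lra. rewrite (Wv_ext i (fun j => E j t) (y t)) by (intro; apply E_eq; lra). auto. }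
    rewrite HVt in H2.
    pose proof (Hpos t ltac:(lra)). unfold cc in H1. lra. }
  set (c := 2 * delta0 * delta0 * m1 / INR K).
  assert (Hc : 0 < c). { unfold c. apply Rdiv_lt_0_compat; [|lra]. assert (0 < delta0*delta0) by nra. nra. }
  assert (HQ : forall t, 1 <= t -> c <= Qv i a (y t) K).
  { intros t Ht. pose proof (HW t Ht).
    pose proof (Wv_le i (y t) K (fun j => ypos j t ltac:(lra))).
    pose proof (Qv_ge i a (y t) K delta0 Hi (fun j => ypos j t ltac:(lra)) Ha).
    apply (Rmult_le_reg_r (INR K)); auto. unfold c.
    replace (2 * delta0 * delta0 * m1 / INR K * INR K) with (2 * delta0 * delta0 * m1) by (field; lra).
    nra. }
  set (T := 2 + m1 / c).
  assert (H3 : (fun s => - E i s - c * s) 1 <= (fun s => - E i s - c * s) T).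
  { assert (0 <= m1 / c) by (apply Rlt_le, Rdiv_lt_0_compat; lra).
    apply (mono_up (fun s => - E i s - c * s) (fun s => - dy s i - c) 1 T); try (unfold T; lra).
    - intros s Hs. apply (dl_minus (fun s => - E i s) (fun s => c * s)). apply dl_opp.
      apply E_der; lra. apply dl_lin.
    - intros s Hs. pose proof (key s K ltac:(lra)). pose proof (HQ s ltac:(lra)).
      pose proof (Hpos s ltac:(lra)). nra. }
  simpl in H3. rewrite !E_eq in H3 by (unfold T; assert (0 <= m1/c) by (apply Rlt_le, Rdiv_lt_0_compat; lra); lra).
  fold m1 in H3. assert (HT : c * T = 2 * c + m1) by (unfold T; field; lra).
  pose proof (Hpos T ltac:(unfold T; assert (0 <= m1/c) by (apply Rlt_le, Rdiv_lt_0_compat; lra); lra)).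
  lra.
Qed.
End Main.

Theorem proposition2p4 (i : nat) (a : nat -> R) (A delta0 : R)
  (y0 : nat -> R) (y : R -> nat -> R) :
  (1 <= i)%nat ->
  0 < A -> 0 < delta0 ->
  (forall j, (1 <= j)%nat -> delta0 <= a j /\ a j <= A * INR j) ->
  in_X1i_pos i y0 -> 0 < y0 i ->
  is_solution a i y0 y ->
  exists tstar, 0 < tstar /\
    is_lub (fun t => 0 < t /\ forall s, 0 <= s < t -> 0 < y s i) tstar.
Proof.
  intros Hi HA Hd Ha Hpos0 Hyi0 Hsol.
  destruct Hsol as [Hy0 [HX [_ [dy Hdy]]]].
  destruct Hpos0 as [_ Hy0p].
  assert (Ha' : forall j, (1 <= j)%nat -> delta0 <= a j) by (intros j hj; apply (Ha j hj)).
  assert (Hlow : forall t, 0 <= t -> forall j, (j < i)%nat -> y t j = 0) by (intros t Ht; apply (HX t Ht)).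
  assert (Hder : forall j, deriv_on_nonneg (fun t => y t j) (fun t => dy t j)) by (intro j; apply (Hdy j)).
  assert (HF : forall t j, 0 <= t -> F_rel a i (y t) j (dy t j)) by (intros t j Ht; apply (Hdy j); auto).
  destruct (proj2 (Hder i) 1 ltac:(lra)) as [d1 [Hd1 Hd1']].
  set (dd := Rmin d1 (y0 i / (Rabs (dy 0 i) + 1))).
  assert (Hab : 0 < Rabs (dy 0 i) + 1) by (pose proof (Rabs_pos (dy 0 i)); lra).
  assert (Hdd : 0 < dd) by (apply Rmin_pos; auto; apply Rdiv_lt_0_compat; lra).
  assert (Hin : forall s, 0 <= s < dd -> 0 < y s i).
  { intros s [Hs1 Hs2]. destruct (Rle_lt_or_eq_dec _ _ Hs1) as [Hlt|Heq].
    - assert (Hs3 : s < d1) by (apply Rlt_le_trans with (1 := Hs2); apply Rmin_l).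
      assert (Hs4 : s < y0 i / (Rabs (dy 0 i) + 1)) by (apply Rlt_le_trans with (1 := Hs2); apply Rmin_r).
      specialize (Hd1' s (conj Hlt Hs3)). simpl in Hd1'. rewrite Hy0 in Hd1'.
      apply Rabs_def2 in Hd1'. destruct Hd1' as [_ Hl].
      assert (Hq : (y s i - y0 i) / s > dy 0 i - 1) by lra.
      assert (Hq2 : y s i - y0 i > s * (dy 0 i - 1)).
      { apply (Rmult_gt_compat_l s) in Hq; auto.
        replace (s * ((y s i - y0 i) / s)) with (y s i - y0 i) in Hq by (field; lra). lra. }
      assert (Hs5 : s * (Rabs (dy 0 i) + 1) < y0 i).
      { apply (Rmult_lt_compat_r (Rabs (dy 0 i) + 1)) in Hs4; auto.
        replace (y0 i / (Rabs (dy 0 i) + 1) * (Rabs (dy 0 i) + 1)) with (y0 i) in Hs4 by (field; lra). lra. }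
      pose proof (Rle_abs (- dy 0 i)). rewrite Rabs_Ropp in H. nra.
    - subst s. rewrite Hy0. auto. }
  assert (Hbd : exists T, 0 <= T /\ y T i <= 0).
  { destruct (classic (exists T, 0 <= T /\ y T i <= 0)) as [H|Hn]; auto.
    exfalso. apply (contradiction i a delta0 y0 y dy Hi Hd Ha' Hy0p Hy0 Hlow Hder HF).
    intros t Ht. destruct (Rlt_le_dec 0 (y t i)) as [h|h]; auto. exfalso; apply Hn; eauto. }
  destruct Hbd as [T [HT1 HT2]].
  assert (Hb : bound (fun t => 0 < t /\ forall s, 0 <= s < t -> 0 < y s i)).
  { exists T. intros t [Ht1 Ht2]. destruct (Rle_lt_dec t T) as [h|h]; auto.
    specialize (Ht2 T (conj HT1 h)). lra. }
  assert (Hne : exists x, (fun t => 0 < t /\ forall s, 0 <= s < t -> 0 < y s i) x).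
  { exists dd. split; auto. }
  destruct (completeness _ Hb Hne) as [m Hm].
  exists m. split; auto.
  destruct Hm as [Hm1 _]. assert (dd <= m) by (apply Hm1; split; auto). lra.
Qed.
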